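(* Let $R_1,R_2$ be commutative rings with nonzero identity, $I_1$ an ideal of $R_1$, $I_2$ an ideal of $R_2$, $R=R_1\times R_2$ and $I=I_1\times I_2$. Let $x\in R_1\setminus I_1$ and $y\in R_2\setminus I_2$. Then for every $a\in I_1$ and $b\in I_2$, the vertex $(x,b)$ is adjacent to the vertex $(a,y)$ in $\Gamma''_I(R)$.
   Context: $R_1\times R_2$ has componentwise operations. For a commutative ring $S$ and an ideal $J$ of $S$, $\Gamma''_J(S)$ is the simple undirected graph whose vertex set is $\{x\in S\setminus J : xS+J\neq S\}$, with distinct vertices $x,y$ adjacent if and only if $x\notin yS+J$ and $y\notin xS+J$. *)

(* Defs.v *)
From mathcomp Require Import all_boot all_algebra.
Set Implicit Arguments. Unset Strict Implicit. Unset Printing Implicit Defensive.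
Import GRing.Theory.
Local Open Scope ring_scope.

(* Subsets of a ring are Prop-valued predicates (rings may be infinite). *)

Definition is_ideal (S : comNzRingType) (J : S -> Prop) : Prop :=
  [/\ J 0,
      (forall a b, J a -> J b -> J (a - b)) &
      (forall r a, J a -> J (r * a))].

Definition in_xSJ (S : comNzRingType) (J : S -> Prop) (x z : S) : Prop :=
  exists s j, J j /\ z = x * s + j.

(* vertex set of Gamma''_J(S): x \notin J and xS + J <> S *)
Definition G2_vertex (S : comNzRingType) (J : S -> Prop) (x : S) : Prop :=
  ~ J x /\ ~ (forall z, in_xSJ J x z).

Definition G2_adj (S : comNzRingType) (J : S -> Prop) (x y : S) : Prop :=
  [/\ G2_vertex J x, G2_vertex J y, x <> y,
      ~ in_xSJ J y x & ~ in_xSJ J x y].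

Definition prod_ideal (R1 R2 : comNzRingType) (I1 : R1 -> Prop) (I2 : R2 -> Prop)
  : (R1 * R2)%type -> Prop := fun p => I1 p.1 /\ I2 p.2.

(* Main.v *)
Require Import Defs.
From mathcomp Require Import all_boot all_algebra.
Local Open Scope ring_scope.
Import GRing.Theory.
Set Implicit Arguments.

Lemma ideal_lin (S : comNzRingType) (J : S -> Prop) (hJ : is_ideal J) r i j :
  J i -> J j -> J (r * i + j).
Proof.
case: hJ => J0 JB JM Ji Jj.
have := JB _ _ (JM r _ Ji) (JB _ _ J0 Jj).
by rewrite sub0r opprK.
Qed.

Lemma ideal_one (S : comNzRingType) (J : S -> Prop) (hJ : is_ideal J) y :
  J 1 -> J y.
Proof. by case: hJ => _ _ JM J1; rewrite -(mulr1 y); apply: JM. Qed.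

Theorem lemma2p6 (R1 R2 : comNzRingType) (I1 : R1 -> Prop) (I2 : R2 -> Prop)
  (hI1 : is_ideal I1) (hI2 : is_ideal I2)
  (x : R1) (y : R2) (hx : ~ I1 x) (hy : ~ I2 y) :
  forall (a : R1) (b : R2), I1 a -> I2 b ->
    G2_adj (S := (R1 * R2)%type) (prod_ideal I1 I2) (x, b) (a, y).
Proof.
move=> a b Ia Ib; split.
- split; first by case.
  move=> /(_ (0, 1)) [s [j [[J1 J2] E]]].
  apply: hy; apply: (ideal_one hI2).
  have -> : (1 : R2) = s.2 * b + j.2.
    by have := congr1 snd E => /= ->; rewrite mulrC.
  exact: ideal_lin.
- split; first by case.
  move=> /(_ (1, 0)) [s [j [[J1 J2] E]]].
  apply: hx; apply: (ideal_one hI1).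
  have -> : (1 : R1) = s.1 * a + j.1.
    by have := congr1 fst E => /= ->; rewrite mulrC.
  exact: ideal_lin.
- by case=> E _; apply: hx; rewrite E.
- move=> [s [j [[J1 J2] E]]]; apply: hx.
  have -> : x = s.1 * a + j.1 by have := congr1 fst E => /= ->; rewrite mulrC.
  exact: ideal_lin.
- move=> [s [j [[J1 J2] E]]]; apply: hy.
  have -> : y = s.2 * b + j.2 by have := congr1 snd E => /= ->; rewrite mulrC.
  exact: ideal_lin.
Qed.
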